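(* Let $\mathcal{H}$ be a complex separable Hilbert space and $A$ a bounded selfadjoint operator on $\mathcal{H}$. Put $\mathfrak{W}(\sigma_A):=\|A\|+\|I-A\|-1$ and $\mathcal{B}_0(A):=\|A\|-\|I-A\|$. Then $A$ is an effect (i.e. $\mathbb{O}\le A\le I$) if and only if $$\mathfrak{W}(\sigma_A)+\bigl|\mathcal{B}_0(A)\bigr|\le 1.$$
   Context: $\|\cdot\|$ is the operator norm, $I$ the identity, $\mathbb{O}$ the zero operator; $A\le B$ means $\langle\varphi,A\varphi\rangle\le\langle\varphi,B\varphi\rangle$ for all $\varphi$. *)

(* Defs.v *)
From mathcomp Require Import all_boot all_order all_algebra.
From mathcomp Require Import complex.
From mathcomp Require Import all_classical all_reals.
Import Order.TTheory GRing.Theory Num.Theory.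
Local Open Scope ring_scope.
Local Open Scope classical_set_scope.

Set Implicit Arguments. Unset Strict Implicit. Unset Printing Implicit Defensive.

Section Hilbert.
Variables (R : realType) (V : lmodType R[i]) (ip : V -> V -> R[i]).

(* <x, y>: conjugate-linear in x, linear in y (physics convention). *)
Definition is_inner_product : Prop :=
  [/\ (forall x a y z, ip x (a *: y + z) = a * ip x y + ip x z),
      (forall x y, ip y x = (ip x y)^*),
      (forall x, 0 <= ip x x) &
      (forall x, ip x x = 0 -> x = 0)].

Definition ipnorm (x : V) : R := Num.sqrt (complex.Re (ip x x)).

Definition ip_complete : Prop :=
  forall u : nat -> V,
    (forall e : R, 0 < e -> exists N : nat, forall m n : nat,
        (N <= m)%N -> (N <= n)%N -> ipnorm (u m - u n) < e) ->
    exists l : V, forall e : R, 0 < e -> exists N : nat, forall n : nat,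
        (N <= n)%N -> ipnorm (u n - l) < e.

Definition ip_separable : Prop :=
  exists d : nat -> V, forall (x : V) (e : R), 0 < e ->
    exists n : nat, ipnorm (x - d n) < e.

Definition separable_hilbert : Prop :=
  [/\ is_inner_product, ip_complete & ip_separable].

Definition bounded_operator (A : V -> V) : Prop :=
  linear A /\ exists M : R, forall x, ipnorm (A x) <= M * ipnorm x.

Definition selfadjoint (A : V -> V) : Prop :=
  forall x y, ip (A x) y = ip x (A y).

Definition opnorm (A : V -> V) : R :=
  sup [set ipnorm (A x) | x in [set x | ipnorm x <= 1]].

Definition idop : V -> V := fun x => x.
Definition zeroop : V -> V := fun _ => 0.
Definition subop (A B : V -> V) : V -> V := fun x => A x - B x.

Definition op_le (A B : V -> V) : Prop :=
  forall phi, ip phi (A phi) <= ip phi (B phi).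

Definition effect (A : V -> V) : Prop := op_le zeroop A /\ op_le A idop.

Definition Wsigma (A : V -> V) : R := opnorm A + opnorm (subop idop A) - 1.
Definition B0 (A : V -> V) : R := opnorm A - opnorm (subop idop A).

End Hilbert.

(* Main.v *)
Require Import Defs.
From mathcomp Require Import all_boot all_order all_algebra.
From mathcomp Require Import complex.
From mathcomp Require Import all_classical all_reals.
From mathcomp Require Import ring lra.
Import Order.TTheory GRing.Theory Num.Theory.
Local Open Scope ring_scope.

Section Aux.
Local Open Scope classical_set_scope.
Local Open Scope complex_scope.
Variables (R : realType) (V : lmodType R[i]) (ip : V -> V -> R[i]).
Variable hip : is_inner_product ip.

Lemma ipDr x y z : ip x (y + z) = ip x y + ip x z.
Proof. case: hip => H _ _ _. by have := H x 1 y z; rewrite scale1r mul1r. Qed.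
Lemma ip0r x : ip x 0 = 0.
Proof. by apply: (addrI (ip x 0)); rewrite addr0 -ipDr addr0. Qed.
Lemma ipZr x a y : ip x (a *: y) = a * ip x y.
Proof. by case: hip => H _ _ _; rewrite -[a *: y]addr0 H ip0r addr0. Qed.
Lemma ipNr x y : ip x (- y) = - ip x y.
Proof. by rewrite -scaleN1r ipZr mulN1r. Qed.
Lemma ipBr x y z : ip x (y - z) = ip x y - ip x z.
Proof. by rewrite ipDr ipNr. Qed.
Lemma ipC x y : ip y x = Num.conj (ip x y).
Proof. by case: hip. Qed.
Lemma ipDl x y z : ip (x + y) z = ip x z + ip y z.
Proof. by rewrite ipC ipDr rmorphD /= -!ipC. Qed.
Lemma ipNl x y : ip (- x) y = - ip x y.
Proof. by rewrite ipC ipNr rmorphN /= -ipC. Qed.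
Lemma ipBl x y z : ip (x - y) z = ip x z - ip y z.
Proof. by rewrite ipDl ipNl. Qed.
Lemma ipZl x (t : R) y : ip (t%:C *: x) y = t%:C * ip x y.
Proof. by rewrite ipC ipZr rmorphM /= -ipC; congr (_ * _); exact: conjc_real. Qed.
Lemma ip0l y : ip 0 y = 0.
Proof. by rewrite ipC ip0r rmorph0. Qed.

Lemma real_of_conj (z : R[i]) : z = Num.conj z -> z = (complex.Re z)%:C.
Proof.
case: z => a b /= [] hb; congr (_ +i* _); lra.
Qed.

Lemma ge0_real (z : R[i]) : 0 <= z -> z = (complex.Re z)%:C /\ 0 <= complex.Re z.
Proof.
case: z => a b; rewrite lecE /= => /andP[/eqP -> ha]; split => //.
Qed.

Lemma ipxx x : ip x x = (ipnorm ip x ^+ 2)%:C.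
Proof.
have [h1 h2] : ip x x = (complex.Re (ip x x))%:C /\ 0 <= complex.Re (ip x x).
  by apply: ge0_real; case: hip.
by rewrite /ipnorm sqr_sqrtr // -h1.
Qed.

Lemma ipnorm_ge0 x : 0 <= ipnorm ip x.
Proof. exact: sqrtr_ge0. Qed.

Lemma ipnorm0 : ipnorm ip 0 = 0.
Proof. by rewrite /ipnorm ip0r /= sqrtr0. Qed.

Lemma ipnorm_eq0 x : ipnorm ip x = 0 -> x = 0.
Proof. move=> h; case: hip => _ _ _ H; apply: H; by rewrite ipxx h expr0n. Qed.


Lemma ReB (z w : R[i]) : complex.Re (z - w) = complex.Re z - complex.Re w.
Proof. by case: z => a b; case: w => c d. Qed.
Lemma ReJ (z : R[i]) : complex.Re (Num.conj z) = complex.Re z.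
Proof. by case: z. Qed.
Lemma ReMC (u : R) (z : R[i]) : complex.Re (u%:C * z) = u * complex.Re z.
Proof. case: z => a b /=; ring. Qed.
Lemma ReC (u : R) : complex.Re (u%:C) = u.
Proof. by []. Qed.

Lemma eff_norm (B : V -> V) (hBadd : forall x y, B (x - y) = B x - B y)
  (hBs : selfadjoint ip B) (hBe : effect ip B) y :
  ipnorm ip (B y) <= ipnorm ip y.
Proof.
case: hBe => h0 h1.
have key : ip (y - B y) (B (y - B y)) + ip (B y) (B y - B (B y))
           = ip y (B y) - ip (B y) (B y).
  by rewrite hBadd ipBl addrNK ipBr hBs.
have p1 : 0 <= ip (y - B y) (B (y - B y)).
  by have := h0 (y - B y); rewrite /zeroop ip0r.
have p2 : 0 <= ip (B y) (B y - B (B y)).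
  by have := h1 (B y); rewrite /idop ipBr subr_ge0.
have p3 : ip (B y) (B y) <= ip y (B y).
  by rewrite -subr_ge0 -key addr_ge0.
have p4 : ip (B y) (B y) <= ip y y.
  by apply: le_trans p3 _; exact: h1.
rewrite !ipxx lecR in p4.
have := ipnorm_ge0 (B y); have := ipnorm_ge0 y; nra.
Qed.

Lemma opnorm_le1 (B : V -> V) (h : forall x, ipnorm ip (B x) <= ipnorm ip x) :
  opnorm ip B <= 1.
Proof.
apply: ge_sup.
  by exists (ipnorm ip (B 0)); exists 0; rewrite //= ipnorm0.
by move=> _ [x hx <-]; apply: le_trans (h x) hx.
Qed.

Lemma lin0 (B : V -> V) : linear B -> B 0 = 0.
Proof.
move=> hB; have := hB 1 0 0; rewrite !scale1r !addr0 => h.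
by apply: (addrI (B 0)); rewrite addr0 -{1}h.
Qed.
Lemma linZ (B : V -> V) : linear B -> forall a x, B (a *: x) = a *: B x.
Proof. by move=> hB a x; have := hB a x 0; rewrite (lin0 _ hB) !addr0. Qed.

Lemma set_ub (B : V -> V) (hB : linear B) M
  (hM : forall x, ipnorm ip (B x) <= M * ipnorm ip x) :
  has_ubound [set ipnorm ip (subop (@idop R V) B x) | x in [set x | ipnorm ip x <= 1]].
Proof.
exists (3 + 2 * M ^+ 2) => _ [x /= hx <-]; rewrite /subop /idop /=.
set v := B x.
have hv : ipnorm ip v <= M * ipnorm ip x by exact: hM.
have E : ip (x - v) (x - v) + ip (x + v) (x + v) = 2 * ip x x + 2 * ip v v.
  rewrite !ipBl !ipBr !ipDl !ipDr; ring.
have E2 := congr1 (@complex.Re R) E.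
rewrite !ipxx /= in E2.
have := ipnorm_ge0 x; have := ipnorm_ge0 v; have := ipnorm_ge0 (x - v);
have := ipnorm_ge0 (x + v).
move: (ipnorm ip x) (ipnorm ip v) (ipnorm ip (x - v)) (ipnorm ip (x + v)) hx hv E2 => c b n m.
move=> hc hbc hE hm hn hb hc0.
have h1 : n <= 1 + n ^+ 2 by nra.
have h2 : b ^+ 2 <= M ^+ 2 * c ^+ 2 by nra.
have h3 : c ^+ 2 <= 1 by nra.
have h4 : M ^+ 2 * c ^+ 2 <= M ^+ 2 by have := sqr_ge0 M; nra.
nra.
Qed.

Lemma pos_of_norm (B : V -> V) (hB : linear B) (hBs : selfadjoint ip B)
  (hub : has_ubound [set ipnorm ip (subop (@idop R V) B x) | x in [set x | ipnorm ip x <= 1]])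
  (hn : opnorm ip (subop (@idop R V) B) <= 1) x : 0 <= ip x (B x).
Proof.
have hle : forall y, ipnorm ip y <= 1 -> ipnorm ip (y - B y) <= 1.
  move=> y hy; apply: le_trans hn.
  by apply: (ub_le_sup hub); exists y.
have [n0|n0] := eqVneq (ipnorm ip x) 0.
  by rewrite (ipnorm_eq0 _ n0) (lin0 _ hB) ip0r.
have hreal : ip x (B x) = Num.conj (ip x (B x)) by rewrite -ipC hBs.
rewrite (real_of_conj _ hreal) ler0c.
set a := complex.Re (ip x (B x)).
set n := ipnorm ip x.
have npos : 0 < n by rewrite lt_neqAle eq_sym n0 ipnorm_ge0.
set k := n^-1.
have kpos : 0 < k by rewrite invr_gt0.
set y := k%:C *: x.
have hyy : ip y y = 1.
  rewrite ipZl ipZr ipxx -/n -!rmorphM /=.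
  have -> : k * (k * n ^+ 2) = 1 by rewrite /k; field; rewrite gt_eqF.
  by [].
have hy1 : ipnorm ip y <= 1.
  have := congr1 (@complex.Re R) hyy; rewrite ipxx /= => h.
  have := ipnorm_ge0 y; nra.
set w := y - B y.
have hw := hle y hy1.
have hww : complex.Re (ip w w) <= 1.
  rewrite ipxx ReC; have := ipnorm_ge0 w; nra.
have hBy : B y = y - w by rewrite /w subKr.
have E1 : ip (B y) (B y) = ip y y - ip y w - (ip w y - ip w w).
  by rewrite {1 2}hBy ipBl !ipBr.
have E2 := congr1 (@complex.Re R) E1.
rewrite !ReB in E2.
have hwy : complex.Re (ip w y) = complex.Re (ip y w) by rewrite ipC ReJ.
have hyw : complex.Re (ip y w) = 1 - complex.Re (ip y (B y)).
  by rewrite /w ipBr ReB hyy.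
have ht : complex.Re (ip y (B y)) = k * (k * a).
  by rewrite /y (linZ _ hB) ipZr ipZl (real_of_conj _ hreal) -/a !ReMC ReC.
have hByy : 0 <= complex.Re (ip (B y) (B y)).
  by rewrite ipxx ReC sqr_ge0.
rewrite hwy hyw ht hyy in E2.
have hka : 0 <= k * (k * a).
  move: hByy; rewrite E2 /=; move: hww; lra.
by rewrite mulrA pmulr_rge0 ?mulr_gt0 in hka.
Qed.

Lemma linB (B : V -> V) : linear B -> forall x y, B (x - y) = B x - B y.
Proof.
move=> hB x y; have := hB (-1) y x.
by rewrite scaleN1r => h; rewrite addrC h scaleN1r addrC.
Qed.

End Aux.

Theorem mainTheorem4 (R : realType) (V : lmodType R[i]) (ip : V -> V -> R[i])
  (hH : separable_hilbert ip) (A : V -> V)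
  (hAb : bounded_operator ip A) (hAs : selfadjoint ip A) :
  effect ip A <-> Wsigma ip A + `|B0 ip A| <= 1.
Proof.
case: hH => hip _ _.
case: hAb => hlin [M hM].
have hIlin : linear (subop (@idop R V) A).
  move=> a u v; rewrite /subop /idop hlin scalerBr.
  by rewrite opprD addrACA.
have hIs : selfadjoint ip (subop (@idop R V) A).
  by move=> x y; rewrite /subop /idop (@ipBl _ _ _ hip) (@ipBr _ _ _ hip) hAs.
have hII : (fun x : V => x - (x - A x)) = A.
  by apply: boolp.funext => x; rewrite subKr.
rewrite /Wsigma /B0.
split.
- move=> [h0 h1].
  have nA : opnorm ip A <= 1.
    by apply: (@opnorm_le1 _ _ _ hip) => y; apply: (@eff_norm _ _ _ hip A (@linB _ _ A hlin) hAs).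
  have effI : effect ip (subop (@idop R V) A).
    split => phi; rewrite /subop /idop /zeroop (@ipBr _ _ _ hip).
      by rewrite (@ip0r _ _ _ hip) subr_ge0; apply: h1.
    have := h0 phi; rewrite /zeroop (@ip0r _ _ _ hip) => h.
    by rewrite lerBlDr lerDl.
  have nI : opnorm ip (subop (@idop R V) A) <= 1.
    by apply: (@opnorm_le1 _ _ _ hip) => y; apply: (@eff_norm _ _ _ hip _ (@linB _ _ _ hIlin) hIs).
  case: (lerP 0 (opnorm ip A - opnorm ip (subop (@idop R V) A))) => h.
    by rewrite ger0_norm //; lra.
  by rewrite ltr0_norm //; lra.
- move=> h.
  have [na nb] : opnorm ip A <= 1 /\ opnorm ip (subop (@idop R V) A) <= 1.
    case: (lerP 0 (opnorm ip A - opnorm ip (subop (@idop R V) A))) => h'.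
      by rewrite ger0_norm // in h; split; lra.
    by rewrite ltr0_norm // in h; split; lra.
  split => phi.
    rewrite /zeroop (@ip0r _ _ _ hip).
    apply: (@pos_of_norm _ _ _ hip A hlin hAs _ nb).
    exact: (@set_ub _ _ _ hip A hlin M hM).
  have := @pos_of_norm _ _ _ hip _ hIlin hIs _ _ phi.
  rewrite /subop /idop (@ipBr _ _ _ hip) subr_ge0; apply.
    exists (`|M|) => _ [x /= hx <-]; rewrite subKr.
    have := hM x; have := @ipnorm_ge0 _ _ ip x; have := @ipnorm_ge0 _ _ ip (A x).
    have := ler_norm M; have := normr_ge0 M; nra.
  by rewrite hII.
Qed.
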